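(* Let $k$ be a field, $V$ a $k$-vector space, $\varphi\in\operatorname{End}_k(V)$ a finite potent endomorphism with AST-decomposition $V=W_\varphi\oplus U_\varphi$ and core-nilpotent decomposition $\varphi=\varphi_1+\varphi_2$. If $\psi\in\operatorname{End}_k(V)$ is a G-Drazin inverse of $\varphi$, then $\psi=\varphi^D+\psi_2$, where $\varphi^D$ is the Drazin inverse of $\varphi$ and $\psi_2\in\operatorname{End}_k(V)$ is the unique linear map with $\psi_2(v)=0$ for $v\in W_\varphi$ and $\psi_2(v)=\psi(v)$ for $v\in U_\varphi$; moreover $\psi_2$ is a G-Drazin inverse of $\varphi_2$.
   Context: An endomorphism $\varphi$ of a $k$-vector space $V$ is finite potent if $\varphi^n(V)$ is finite dimensional for some $n$. For such $\varphi$, the AST-decomposition is $V=U_\varphi\oplus W_\varphi$ where $U_\varphi=\{v\in V: \varphi^m(v)=0 \text{ for some } m\}$ and $W_\varphi=\{v\in V: p(\varphi)(v)=0 \text{ for some } p(x)\in k[x] \text{ coprime to } x\}$; both are $\varphi$-invariant, $\varphi|_{U_\varphi}$ is nilpotent, $W_\varphi$ is finite dimensional and $\varphi|_{W_\varphi}$ is an automorphism. The index $i(\varphi)$ is the nilpotency order of $\varphi|_{U_\varphi}$. The Drazin inverse $\varphi^D$ is the linear map equal to $(\varphi|_{W_\varphi})^{-1}$ on $W_\varphi$ and to $0$ on $U_\varphi$. The core-nilpotent decomposition is $\varphi=\varphi_1+\varphi_2$ with $\varphi_1=\varphi\circ\varphi^D\circ\varphi$ (equal to $\varphi$ on $W_\varphi$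 and $0$ on $U_\varphi$) and $\varphi_2=\varphi-\varphi_1$ (equal to $0$ on $W_\varphi$ and $\varphi$ on $U_\varphi$). For a finite potent $\theta$ with index $s=i(\theta)$, an endomorphism $\psi$ is a G-Drazin inverse of $\theta$ if $\theta\circ\psi\circ\theta=\theta$ and $\psi\circ\theta^{s}=\theta^{s}\circ\psi$. *)

(* Defs.v *)
From HB Require Import structures.
From mathcomp Require Import all_boot all_order all_algebra.
Set Implicit Arguments. Unset Strict Implicit. Unset Printing Implicit Defensive.
Import GRing.Theory.
Local Open Scope ring_scope.

Section FinitePotent.
Variables (k : fieldType) (V : lmodType k).

(* Endomorphisms are plain functions V -> V together with the hypothesis
   [linear f]; the n-th power phi^n is [iter n phi]. *)
Definition lin_endo (f : V -> V) : Prop := linear f.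

Definition findim (S : V -> Prop) : Prop :=
  exists s : seq V, forall v, S v ->
    exists c : nat -> k, v = \sum_(i < size s) c i *: s`_i.

Definition image_pow (phi : V -> V) (n : nat) : V -> Prop :=
  fun v => exists x, v = iter n phi x.

Definition finite_potent (phi : V -> V) : Prop :=
  exists n, findim (image_pow phi n).

Definition poly_app (p : {poly k}) (phi : V -> V) (v : V) : V :=
  \sum_(i < size p) p`_i *: iter i phi v.

Definition U_ (phi : V -> V) : V -> Prop :=
  fun v => exists m, iter m phi v = 0.

Definition W_ (phi : V -> V) : V -> Prop :=
  fun v => exists p : {poly k}, coprimep p 'X /\ poly_app p phi v = 0.

Definition is_index (phi : V -> V) (s : nat) : Prop :=
  (forall u, U_ phi u -> iter s phi u = 0) /\
  (forall m, (forall u, U_ phi u -> iter m phi u = 0) -> (s <= m)%N).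

Definition is_drazin_inv (phi delta : V -> V) : Prop :=
  linear delta /\
  (forall w, W_ phi w -> W_ phi (delta w) /\ phi (delta w) = w) /\
  (forall u, U_ phi u -> delta u = 0).

Definition core_part (phi phiD : V -> V) : V -> V :=
  fun v => phi (phiD (phi v)).
Definition nil_part (phi phiD : V -> V) : V -> V :=
  fun v => phi v - core_part phi phiD v.

Definition gdrazin (theta psi : V -> V) : Prop :=
  exists s, is_index theta s /\
    (forall v, theta (psi (theta v)) = theta v) /\
    (forall v, psi (iter s theta v) = iter s theta (psi v)).

End FinitePotent.

(* Main.v *)
Require Import Defs.
From HB Require Import structures.
From mathcomp Require Import all_boot all_order all_algebra.
From Stdlib Require Import Classical ClassicalEpsilon FunctionalExtensionality.
Set Implicit Arguments. Unset Strict Implicit. Unset Printing Implicit Defensive.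
Import GRing.Theory.
Local Open Scope ring_scope.

Section Aux.
Variables (k : fieldType) (V : lmodType k).
Implicit Types (f g : V -> V) (p q : {poly k}) (v : V).

Lemma linD f : lin_endo f -> forall x y, f (x + y) = f x + f y.
Proof. by move=> lf x y; have := lf 1 x y; rewrite !scale1r. Qed.

Lemma lin0 f : lin_endo f -> f 0 = 0.
Proof.
move=> lf; have h := linD lf 0 0; rewrite addr0 in h.
by apply: (addrI (f 0)); rewrite -h addr0.
Qed.

Lemma linZ f : lin_endo f -> forall a x, f (a *: x) = a *: f x.
Proof. by move=> lf a x; have := lf a x 0; rewrite addr0 lin0 // addr0. Qed.

Lemma linN f : lin_endo f -> forall x, f (- x) = - f x.
Proof. by move=> lf x; rewrite -scaleN1r linZ // scaleN1r. Qed.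

Lemma linB f : lin_endo f -> forall x y, f (x - y) = f x - f y.
Proof. by move=> lf x y; rewrite linD // linN. Qed.

Lemma lin_sum f n (F : 'I_n -> V) : lin_endo f -> f (\sum_(i < n) F i) = \sum_(i < n) f (F i).
Proof. by move=> lf; apply: (big_morph f (linD lf) (lin0 lf)). Qed.

Lemma lin_iter f n : lin_endo f -> lin_endo (iter n f).
Proof.
move=> lf; elim: n => [|n IH] a u v //=.
by rewrite IH lf.
Qed.

Lemma ex_min (P : nat -> Prop) n : P n -> exists t, P t /\ forall m, P m -> (t <= m)%N.
Proof.
elim/ltn_ind: n => n IH Pn.
case: (classic (exists m, (m < n)%N /\ P m)) => [[m [lt Pm]]|H].
  exact: IH m lt Pm.
exists n; split=> // m Pm; rewrite leqNgt; apply/negP => lt; apply: H; by exists m.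
Qed.

Variable phi : V -> V.
Hypothesis lphi : lin_endo phi.

Lemma iter0v n : iter n phi 0 = 0.
Proof. exact: lin0 (lin_iter n lphi). Qed.

Lemma poly_appE p v N : (size p <= N)%N -> poly_app p phi v = \sum_(i < N) p`_i *: iter i phi v.
Proof.
move=> hN; rewrite /poly_app (big_ord_widen N (fun i => p`_i *: iter i phi v) hN).
rewrite big_mkcond; apply: eq_bigr => i _ /=.
case: ifP => // /negbT; rewrite -leqNgt => hi.
by rewrite nth_default // scale0r.
Qed.

Lemma poly_appD p q v : poly_app (p + q) phi v = poly_app p phi v + poly_app q phi v.
Proof.
rewrite (poly_appE _ (size_polyD p q)) (poly_appE _ (leq_maxl (size p) (size q))).
rewrite (poly_appE _ (leq_maxr (size p) (size q))).
rewrite -big_split; apply: eq_bigr => i _; by rewrite coefD scalerDl.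
Qed.

Lemma poly_appZ c p v : poly_app (c *: p) phi v = c *: poly_app p phi v.
Proof.
rewrite (poly_appE _ (size_scale_leq c p)) /poly_app scaler_sumr.
by apply: eq_bigr => i _; rewrite coefZ scalerA.
Qed.

Lemma poly_appC c v : poly_app c%:P phi v = c *: v.
Proof. by rewrite (poly_appE _ (size_polyC_leq1 c)) big_ord1 coefC. Qed.

Lemma poly_app1 v : poly_app 1 phi v = v.
Proof. by rewrite -polyC1 poly_appC scale1r. Qed.

Lemma poly_app0 p : poly_app p phi 0 = 0.
Proof. by rewrite /poly_app big1 // => i _; rewrite iter0v scaler0. Qed.

Lemma poly_app_phi p v : poly_app p phi (phi v) = phi (poly_app p phi v).
Proof.
rewrite /poly_app lin_sum //; apply: eq_bigr => i _.
by rewrite linZ // -iterSr -iterS.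
Qed.

Lemma poly_appMX p v : poly_app (p * 'X) phi v = poly_app p phi (phi v).
Proof.
have hs : (size (p * 'X)%R <= (size p).+1)%N.
  by apply: leq_trans (size_polyMleq _ _) _; rewrite size_polyX addn2.
rewrite (poly_appE _ hs) big_ord_recl coefMX eqxx scale0r add0r /poly_app.
by apply: eq_bigr => i _; rewrite coefMX /= add0n -iterS iterSr.
Qed.

Lemma poly_appM p q v : poly_app (p * q) phi v = poly_app p phi (poly_app q phi v).
Proof.
elim/poly_ind: p v => [|p c IH] v.
  by rewrite mul0r /poly_app size_poly0 !big_ord0.
rewrite mulrDl !poly_appD [p * 'X * q]mulrAC !poly_appMX IH mul_polyC poly_appZ !poly_appC.
by rewrite poly_app_phi.
Qed.

Lemma poly_appXn n v : poly_app 'X^n phi v = iter n phi v.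
Proof.
elim: n v => [|n IH] v; first by rewrite expr0 poly_app1.
by rewrite exprSr poly_appMX IH -iterSr.
Qed.

Lemma poly_app_lin p : lin_endo (poly_app p phi).
Proof.
move=> a u v; rewrite /poly_app scaler_sumr -big_split; apply: eq_bigr => i _ /=.
by rewrite (lin_iter i lphi) scalerDr !scalerA mulrC.
Qed.

End Aux.
Lemma factorX (k : fieldType) (r : {poly k}) : r != 0 ->
  exists j (r' : {poly k}), r = r' * 'X^j /\ coprimep r' 'X.
Proof.
move=> nz; move: {2}(size r) (leqnn (size r)) => N.
elim: N r nz => [|N IH] r nz hs.
  by move: nz; rewrite -size_poly_eq0; move: hs; case: (size r).
case: (boolP (root r 0)) => h.
  case/factor_theorem: h => q; rewrite polyC0 subr0 => hq.
  have qnz : q != 0 by apply: contraNneq nz => q0; rewrite hq q0 mul0r.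
  move: hs; rewrite hq size_mulX // ltnS => hs.
  have [j [r' [e c]]] := IH q qnz hs.
  by exists j.+1, r'; rewrite e exprSr mulrA.
exists 0%N, r; split; first by rewrite expr0 mulr1.
by have := coprimep_XsubC r 0; rewrite polyC0 subr0 => ->.
Qed.

Section Decomp.
Variables (k : fieldType) (V : lmodType k) (phi : V -> V).
Hypothesis lphi : lin_endo phi.
Hypothesis fp : finite_potent phi.

Lemma annih v : exists r : {poly k}, r != 0 /\ poly_app r phi v = 0.
Proof.
case: fp => n [s hs].
set d := size s.
have hc : forall i : 'I_d.+1, exists c : nat -> k,
    iter n phi (iter i phi v) = \sum_(j < d) c j *: s`_j.
  move=> i; apply: hs; by exists (iter i phi v).
have [C hC] : exists C : 'I_d.+1 -> nat -> k, forall i : 'I_d.+1,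
    iter n phi (iter i phi v) = \sum_(j < d) C i j *: s`_j.
  exists (fun i => proj1_sig (constructive_indefinite_description _ (hc i))).
  move=> i; exact: proj2_sig (constructive_indefinite_description _ (hc i)).
pose A : 'M[k]_(d.+1, d) := \matrix_(i, j) C i (nat_of_ord j).
have nf : ~~ row_free A.
  apply/negP => /eqP h; have := rank_leq_col A; by rewrite h ltnn.
have knz : kermx A != 0 by rewrite kermx_eq0.
have [i0 hi0] : exists i, row i (kermx A) != 0.
  case: (pickP (fun i => row i (kermx A) != 0)) => [i0 hi0|h0]; first by exists i0.
  move: knz; rewrite (_ : kermx A = 0) ?eqxx //.
  apply/row_matrixP => i; rewrite row0; apply/eqP.
  by rewrite -[_ == _]negbK h0.
set r := row i0 (kermx A).
have hrA : r *m A = 0 by rewrite -row_mul mulmx_ker row0.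
have hz : forall j : 'I_d, \sum_(i < d.+1) r 0 i * C i j = 0.
  move=> j; have := congr1 (fun M : 'rV_d => M 0 j) hrA; rewrite /= !mxE => h; rewrite -[RHS]h.
  by apply: eq_bigr => i _; rewrite ?mxE.
pose q : {poly k} := \poly_(i < d.+1) r 0 (inord i).
have qnz : q != 0.
  apply/negP => /eqP q0; move/negP: hi0; apply; apply/eqP/rowP => i.
  have := congr1 (fun p : {poly k} => p`_i) q0; rewrite /= coef_poly ltn_ord inord_val coef0 => ->.
  by rewrite mxE.
exists ('X^n * q); split; first by rewrite mulf_neq0 // monic_neq0 // monicXn.
rewrite poly_appM // poly_appXn // (poly_appE _ _ (size_poly _ _)) lin_sum; last exact: lin_iter.
rewrite (eq_bigr (fun i : 'I_d.+1 => \sum_(j < d) (r 0 i * C i j) *: s`_j)); last first.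
  move=> i _; rewrite linZ; last exact: lin_iter.
  rewrite coef_poly ltn_ord inord_val hC scaler_sumr; apply: eq_bigr => j _.
  by rewrite scalerA.
rewrite exchange_big /= big1 // => j _; by rewrite -scaler_suml hz scale0r.
Qed.

Lemma decomp v : exists w u, W_ phi w /\ U_ phi u /\ v = w + u.
Proof.
have [r0 [nz hr0]] := annih v.
have [j [r' [e cop]]] := factorX nz.
have /Bezout_eq1_coprimepP [[a b] /= hab] := coprimep_expr j cop.
exists (poly_app (b * 'X^j) phi v), (poly_app (a * r') phi v); split; [|split].
- exists r'; split => //.
  by rewrite -poly_appM // mulrCA -e poly_appM // hr0 poly_app0.
- exists j; rewrite -poly_appXn // -poly_appM // mulrC -mulrA -e poly_appM // hr0 poly_app0 //.
- by rewrite -poly_appD // addrC hab poly_app1.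
Qed.

End Decomp.
Section Main.
Variables (k : fieldType) (V : lmodType k) (phi phiD : V -> V).
Hypothesis lphi : lin_endo phi.
Hypothesis dz : is_drazin_inv phi phiD.

Let lphiD : lin_endo phiD. Proof. by case: dz. Qed.
Let dzW w : W_ phi w -> W_ phi (phiD w) /\ phi (phiD w) = w.
Proof. by case: dz => _ [h _]; apply: h. Qed.
Let dzU u : U_ phi u -> phiD u = 0.
Proof. by case: dz => _ [_ h]; apply: h. Qed.

Lemma iter_ge m x m' : iter m phi x = 0 -> (m <= m')%N -> iter m' phi x = 0.
Proof. by move=> h hm; rewrite -(subnK hm) iterD h iter0v. Qed.

Lemma U_add x y : U_ phi x -> U_ phi y -> U_ phi (x + y).
Proof.
move=> [m1 h1] [m2 h2]; exists (maxn m1 m2).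
by rewrite (linD (lin_iter _ lphi)) (iter_ge h1 (leq_maxl _ _)) (iter_ge h2 (leq_maxr _ _)) addr0.
Qed.

Lemma U_opp x : U_ phi x -> U_ phi (- x).
Proof. by move=> [m h]; exists m; rewrite (linN (lin_iter _ lphi)) h oppr0. Qed.

Lemma U_phi x : U_ phi x -> U_ phi (phi x).
Proof. by move=> [m h]; exists m; rewrite -iterSr iterS h lin0. Qed.

Lemma U_iter x n : U_ phi x -> U_ phi (iter n phi x).
Proof. by move=> hx; elim: n => //= n IH; apply: U_phi. Qed.

Lemma W_sub a b : W_ phi a -> W_ phi b -> W_ phi (a - b).
Proof.
move=> [p1 [c1 h1]] [p2 [c2 h2]]; exists (p1 * p2); split; first by rewrite coprimepMl c1.
rewrite (linB (poly_app_lin lphi _)) {1}mulrC !poly_appM //.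
by rewrite h1 h2 !poly_app0 // subrr.
Qed.

Lemma W_phi a : W_ phi a -> W_ phi (phi a).
Proof. by move=> [p [c h]]; exists p; split => //; rewrite poly_app_phi // h lin0. Qed.

Lemma W_iter a n : W_ phi a -> W_ phi (iter n phi a).
Proof. by move=> ha; elim: n => //= n IH; apply: W_phi. Qed.

Lemma WU0 w : W_ phi w -> U_ phi w -> w = 0.
Proof. by move=> hw hu; have [_ e] := dzW hw; rewrite -e dzU // lin0. Qed.

Lemma WU_sum0 a b : W_ phi a -> U_ phi b -> a + b = 0 -> a = 0.
Proof.
move=> ha hb e; apply: WU0 => //.
have -> : a = - b by apply/eqP; rewrite -addr_eq0 e.
exact: U_opp.
Qed.

Lemma phi_inj_W a : W_ phi a -> phi a = 0 -> a = 0.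
Proof. by move=> ha h; apply: WU0 => //; exists 1%N. Qed.

Lemma iterD_W w n : W_ phi w -> W_ phi (iter n phiD w) /\ iter n phi (iter n phiD w) = w.
Proof.
move=> hw; elim: n => [|n [IH1 IH2]] //=.
have [h1 h2] := dzW IH1; split => //.
by rewrite -iterS iterSr h2 IH2.
Qed.

Variable psi : V -> V.
Hypothesis lpsi : lin_endo psi.
Hypothesis fp : finite_potent phi.
Variable s : nat.
Hypothesis hs : is_index phi s.
Hypothesis h1 : forall v, phi (psi (phi v)) = phi v.
Hypothesis h2 : forall v, psi (iter s phi v) = iter s phi (psi v).

Lemma keyW w : W_ phi w -> psi w = phiD w.
Proof.
move=> hw; have [hy1 hy2] := iterD_W s hw.
have [a [b [ha [hb e]]]] := decomp lphi fp (psi (iter s phiD w)).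
have hz : psi w = iter s phi a.
  by rewrite -{1}hy2 h2 e (linD (lin_iter _ lphi)) (hs.1 b hb) addr0.
have Wz : W_ phi (psi w) by rewrite hz; apply: W_iter.
have [hx1 hx2] := dzW hw.
have hphi : phi (psi w) = w by rewrite -{1}hx2 h1 hx2.
apply/eqP; rewrite -subr_eq0; apply/eqP; apply: phi_inj_W; first exact: W_sub.
by rewrite (linB lphi) hphi hx2 subrr.
Qed.

End Main.
Theorem corollary3p5 (k : fieldType) (V : lmodType k) (phi psi phiD : V -> V) :
  lin_endo phi -> finite_potent phi ->
  is_drazin_inv phi phiD ->
  lin_endo psi -> gdrazin phi psi ->
  exists psi2 : V -> V,
    [/\ lin_endo psi2,
        (forall w, W_ phi w -> psi2 w = 0) /\
        (forall u, U_ phi u -> psi2 u = psi u),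
        (forall psi2' : V -> V, lin_endo psi2' ->
           (forall w, W_ phi w -> psi2' w = 0) ->
           (forall u, U_ phi u -> psi2' u = psi u) ->
           psi2' = psi2),
        (forall v, psi v = phiD v + psi2 v)
      & gdrazin (nil_part phi phiD) psi2].
Proof.
move=> lphi fp dz lpsi [s [hs [h1 h2]]].
have lphiD : lin_endo phiD by case: dz.
have dzW w : W_ phi w -> W_ phi (phiD w) /\ phi (phiD w) = w.
  by case: dz => _ [h _]; apply: h.
have dzU u : U_ phi u -> phiD u = 0 by case: dz => _ [_ h]; apply: h.
have K w : W_ phi w -> psi w = phiD w by apply: (keyW lphi dz fp hs h1 h2).
exists (fun v => psi v - phiD v); split.
- move=> a u v /=; rewrite lpsi lphiD scalerBr opprD.
  by rewrite addrACA.
- by split=> [w hw|u hu]; [rewrite K ?subrr | rewrite dzU ?subr0].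
- move=> p' lp' hW hU; apply: functional_extensionality => v.
  have [w [u [hw [hu ->]]]] := decomp lphi fp v.
  rewrite (linD lp') hW // hU // add0r (linD lpsi) (linD lphiD) (K w hw) (dzU u hu) addr0.
  by rewrite [phiD w + _]addrC addrK.
- by move=> v; rewrite addrC subrK.
set phi2 := nil_part phi phiD.
set psi2 := fun v => psi v - phiD v.
have lphi2 : lin_endo phi2.
  move=> a u v; rewrite /phi2 /nil_part /core_part.
  by rewrite !lphi lphiD lphi scalerBr opprD addrACA.
have phi2_W w : W_ phi w -> phi2 w = 0.
  move=> hw; rewrite /phi2 /nil_part /core_part.
  by have [_ ->] := dzW _ (W_phi lphi hw); rewrite subrr.
have phi2_U u : U_ phi u -> phi2 u = phi u.
  move=> hu; rewrite /phi2 /nil_part /core_part.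
  by rewrite dzU ?(lin0 lphi) ?subr0 //; apply: (U_phi lphi).
have iter_phi2_U u n : U_ phi u -> iter n phi2 u = iter n phi u.
  move=> hu; elim: n => //= n ->; apply: phi2_U; exact: (U_iter lphi).
have phi2_dec v w u : W_ phi w -> U_ phi u -> v = w + u -> phi2 v = phi u.
  by move=> hw hu ->; rewrite (linD lphi2) phi2_W // phi2_U // add0r.
have Ps : forall v, iter s.+1 phi2 v = 0.
  move=> v; have [w [u [hw [hu e]]]] := decomp lphi fp v.
  rewrite iterSr (phi2_dec _ _ _ hw hu e) iter_phi2_U; last exact: (U_phi lphi).
  by rewrite -iterSr iterS (hs.1 u hu) lin0.
have [t [Pt tmin]] := @ex_min (fun m => forall v, iter m phi2 v = 0) _ Ps.
exists t; split; [split|split].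
- by move=> u _; apply: Pt.
- move=> m hm; apply: tmin => v; apply: hm; exists s.+1; exact: Ps.
- move=> v; have [w [u [hw [hu e]]]] := decomp lphi fp v.
  rewrite (phi2_dec _ _ _ hw hu e).
  have hu' : U_ phi (phi u) by apply: (U_phi lphi).
  rewrite /psi2 (dzU _ hu') subr0.
  have [a [b [ha [hb e2]]]] := decomp lphi fp (psi (phi u)).
  rewrite (phi2_dec _ _ _ ha hb e2).
  have h := h1 u; rewrite e2 (linD lphi) in h.
  have a0 : phi a = 0.
    apply: (WU_sum0 lphi dz (W_phi lphi ha) (b := phi b - phi u)).
      by apply: (U_add lphi); [exact: (U_phi lphi) | apply: (U_opp lphi); exact: (U_phi lphi)].
    by rewrite addrA h subrr.
  by rewrite a0 add0r in h.
- by move=> v; rewrite /psi2 /= !Pt (lin0 lpsi) (lin0 lphiD) subr0.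
Qed.
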